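(* Let $p\ge 1$, let $k_j>0$, let $\Gamma$ be a real symmetric positive definite $p\times p$ matrix, and let $B$ be a real symmetric $p\times p$ matrix. Consider the optimization problem \[ \max_{Y\in\mathbb{S}_+^p}\; -\operatorname{tr}\big(Y\Gamma^{-1}\big)+k_j\log\det\Big(B+\tfrac{1}{k_j}Y\Big)\quad\text{subject to}\quad -k_jB\prec Y . \] Then an optimal solution of this problem is \[ Y^\ast=k_j\,\Gamma^{1/2}\,\mathrm{proj}_{\mathbb{S}_+^p}\Big(I-\Gamma^{-1/2}B\Gamma^{-1/2}\Big)\,\Gamma^{1/2}. \]
   Context: $\mathbb{S}_+^p$ denotes the set of real symmetric positive semi-definite $p\times p$ matrices. For symmetric matrices $X,Y$, $X\prec Y$ means $Y-X$ is positive definite; $I$ is the identity. $\Gamma^{1/2}$ is the symmetric positive definite square root of $\Gamma$ and $\Gamma^{-1/2}$ its inverse. $\mathrm{proj}_{\mathbb{S}_+^p}$ is the Frobenius-norm orthogonal projection onto $\mathbb{S}_+^p$ (for a symmetric matrix with eigen-decomposition $U\mathrm{diag}(\lambda)U^{\mathsf T}$ it equals $U\mathrm{diag}(\max(\lambda,0))U^{\mathsf T}$). *)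

(* Defs.v *)
From HB Require Import structures.
From mathcomp Require Import all_boot all_order all_algebra.
From mathcomp Require Import all_classical all_reals all_analysis.
Set Implicit Arguments. Unset Strict Implicit. Unset Printing Implicit Defensive.
Import Order.TTheory GRing.Theory Num.Theory.
Local Open Scope ring_scope.

Definition qform (R : realType) (p : nat) (A : 'M[R]_p) (x : 'cV[R]_p) : R :=
  (x^T *m A *m x) 0 0.

Definition symmx_real (R : realType) (p : nat) (A : 'M[R]_p) : Prop := A^T = A.

Definition psdmx (R : realType) (p : nat) (A : 'M[R]_p) : Prop :=
  symmx_real A /\ forall x : 'cV[R]_p, 0 <= qform A x.

Definition pdmx (R : realType) (p : nat) (A : 'M[R]_p) : Prop :=
  symmx_real A /\ forall x : 'cV[R]_p, x != 0 -> 0 < qform A x.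

Definition lt_loewner (R : realType) (p : nat) (X Y : 'M[R]_p) : Prop :=
  pdmx (Y - X).

Definition frob2 (R : realType) (p : nat) (A : 'M[R]_p) : R :=
  \sum_(i < p) \sum_(j < p) (A i j) ^+ 2.

Definition is_sqrtmx (R : realType) (p : nat) (G S : 'M[R]_p) : Prop :=
  pdmx S /\ S *m S = G.

Definition is_proj_psd (R : realType) (p : nat) (X P : 'M[R]_p) : Prop :=
  psdmx P /\ forall Q : 'M[R]_p, psdmx Q -> frob2 (X - P) <= frob2 (X - Q).

Definition objective (R : realType) (p : nat) (k : R) (G B Y : 'M[R]_p) : R :=
  - \tr (Y *m invmx G) + k * ln (\det (B + k^-1 *: Y)).

Definition feasible (R : realType) (p : nat) (k : R) (B Y : 'M[R]_p) : Prop :=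
  psdmx Y /\ lt_loewner (- (k *: B)) Y.

Definition is_optimal (R : realType) (p : nat) (k : R) (G B Y : 'M[R]_p) : Prop :=
  feasible k B Y /\
  forall Y' : 'M[R]_p, feasible k B Y' -> objective k G B Y' <= objective k G B Y.

(* Main.v *)
Require Import Defs.
From HB Require Import structures.
From mathcomp Require Import all_boot all_order all_algebra.
From mathcomp Require Import all_classical all_reals all_analysis.
From mathcomp Require Import ring lra.
Import Order.TTheory GRing.Theory Num.Theory.
Local Open Scope ring_scope.
Set Warnings "-notation-overridden,-ambiguous-paths,-notation-incompatible-prefix".
Section Main.
Variable R : realType.


Lemma mx11_mulE (a b : 'M[R]_1) : (a *m b) 0 0 = a 0 0 * b 0 0.
Proof. by rewrite mxE big_ord1. Qed.

Lemma tr11E (a : 'M[R]_1) : a^T 0 0 = a 0 0.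
Proof. by rewrite mxE. Qed.

Lemma qform_block n (a : 'M[R]_1) (u : 'M[R]_(1, n)) (D : 'M[R]_n) (t : R)
  (y : 'cV[R]_n) :
  qform (block_mx a u u^T D) (col_mx t%:M y) =
  a 0 0 * t ^+ 2 + 2 * t * (u *m y) 0 0 + qform D y.
Proof.
rewrite /qform tr_col_mx tr_scalar_mx mul_row_block mul_row_col.
rewrite !mulmxDl !mul_scalar_mx !mul_mx_scalar -!scalemxAl.
have -> : y^T *m u^T = (u *m y)^T by rewrite trmx_mul.
rewrite !mxE; ring.
Qed.



Lemma lin_nonneg_zero (b c : R) : (forall t, 0 <= t * b + c) -> b = 0.
Proof.
move=> h; apply/eqP; apply/negPn/negP => hb.
have := h (- (`|c| + 1) / b).
rewrite mulrAC -mulrA divff // mulr1.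
have := ler_norm c; lra.
Qed.

Lemma chol_step n
  (IH : forall A : 'M[R]_n, psdmx A -> exists L : 'M[R]_n, is_trig_mx L /\ A = L *m L^T)
  (A : 'M[R]_(1 + n)) : psdmx A -> exists L : ('M[R]_(1+n)), is_trig_mx L /\ A = L *m L^T.
Proof.
move=> [hs hq].
set a := ulsubmx A; set u := ursubmx A; set D := drsubmx A.
have hdl : dlsubmx A = u^T by rewrite /u trmx_ursub hs.
have hD : D^T = D by rewrite /D trmx_drsub hs.
have hA : A = block_mx a u u^T D by rewrite -hdl submxK.
have hq' : forall t y, 0 <= a 0 0 * t^+2 + 2*t*(u *m y) 0 0 + qform D y.
  by move=> t y; rewrite -qform_block -hA; apply: hq.
set al := a 0 0 in hq'.
have ha0 : 0 <= al.
  have := hq' 1 0; rewrite mulmx0 /qform mulmx0 !mxE; lra.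
have hu : al = 0 -> u = 0.
  move=> h0.
  have hb : 2 * (u *m u^T) 0 0 = 0.
    apply: (@lin_nonneg_zero _ (qform D u^T)) => t.
    have := hq' t u^T; rewrite h0; lra.
  have hb' : \sum_j u 0 j ^+ 2 = 0.
    have : (u *m u^T) 0 0 = 0 by lra.
    rewrite mxE => h; rewrite -[RHS]h; apply: eq_bigr => j _; by rewrite !mxE expr2.
  apply/rowP => j; rewrite [RHS]mxE.
  have := psumr_eq0P (fun k _ => sqr_ge0 (u 0 k)) hb' (i:=j) isT.
  by move/eqP; rewrite sqrf_eq0 => /eqP.
set l := Num.sqrt al.
have hl2 : l * l = al by rewrite -expr2 sqr_sqrtr.
set v := l^-1 *: u^T.
have hvT : v^T = l^-1 *: u by rewrite /v linearZ /= trmxK.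
set S := D - v *m v^T.
have hSpsd : psdmx S.
  split.
    by rewrite /symmx_real /S linearB /= trmx_mul trmxK hD.
  move=> y.
  have -> : qform S y = qform D y - ((v^T *m y) 0 0) ^+ 2.
    rewrite /qform /S mulmxBr mulmxBl mxE [X in _ + X]mxE; congr (_ - _).
    rewrite !mulmxA -(mulmxA _ v^T) -[y^T *m v]trmxK trmx_mul trmxK.
    by rewrite mx11_mulE tr11E expr2.
  rewrite hvT -scalemxAl mxE.
  have [h0|hpos] := eqVneq al 0.
    rewrite (hu h0) mul0mx mxE mulr0 expr0n /= subr0.
    by have := hq' 0 y; rewrite expr0n /= !mulr0 !mul0r !add0r.
  have hapos : 0 < al by rewrite lt0r hpos.
  set b := (u *m y) 0 0.
  have := hq' (- b / al) y; rewrite -/b.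
  have -> : al * (- b / al) ^+ 2 + 2 * (- b / al) * b = - (b ^+ 2 / al).
    by field.
  have -> : (l^-1 * b) ^+ 2 = b ^+ 2 / al.
    by rewrite exprMn exprVn expr2 hl2 mulrC.
  lra.
have [L' [hL'trig hL']] := IH S hSpsd.
exists (block_mx l%:M 0 v L'); split.
  by rewrite is_trig_block_mx // eqxx scalar_mx_is_trig hL'trig.
rewrite tr_block_mx trmx0 tr_scalar_mx mulmx_block.
rewrite !mulmx0 !mul0mx !addr0 -hL' -scalar_mxM mul_scalar_mx mul_mx_scalar.
rewrite hl2 /S [X in block_mx _ _ _ X]addrC subrK hvT scalerA.
rewrite hA; congr block_mx.
- by rewrite [a]mx11_scalar.
- have [h0|hpos] := eqVneq al 0; first by rewrite (hu h0) scaler0.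
  have hl : l != 0 by rewrite sqrtr_eq0 -ltNge lt0r hpos.
  by rewrite mulfV // scale1r.
- rewrite /v scalerA.
  have [h0|hpos] := eqVneq al 0; first by rewrite (hu h0) trmx0 scaler0.
  have hl : l != 0 by rewrite sqrtr_eq0 -ltNge lt0r hpos.
  by rewrite mulfV // scale1r.
Qed.

Lemma chol n (A : 'M[R]_n) : psdmx A -> exists L : 'M[R]_n, is_trig_mx L /\ A = L *m L^T.
Proof.
elim: n A => [|n IH] A hA.
  by exists 0; split; [exact: mx0_is_trig | apply/matrixP => [[]]].
by have [L hL] := @chol_step n IH A hA; exists L.
Qed.



Lemma L0 (a b : R) : (forall s, 0 < s < 1 -> 0 <= a + s * b) -> 0 <= a.
Proof.
move=> h; rewrite leNgt; apply/negP => ha.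
set d := `|b| - a + 1.
have hd : 0 < d by rewrite /d; have := normr_ge0 b; lra.
set s := - a / d.
have hsd : s * d = - a by rewrite /s mulrVK // unitfE gt_eqF.
have hs0 : 0 < s by rewrite /s divr_gt0 // oppr_gt0.
have hs1 : s < 1 by rewrite /s ltr_pdivrMr // mul1r /d; have := normr_ge0 b; lra.
have := h s; rewrite hs0 hs1 => /(_ isT) hab.
have hb : s * b <= s * `|b| := ler_wpM2l (ltW hs0) (ler_norm b).
have : 0 <= (a + s * `|b|) * d by apply: mulr_ge0; [lra | exact: ltW].
rewrite mulrDl -mulrA (mulrC `|b|) mulrA hsd /d.
nra.
Qed.

Lemma qform_conj {n m} (M : 'M[R]_(m, n)) (A : 'M[R]_m) x : qform (M^T *m A *m M) x = qform A (M *m x).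
Proof. by rewrite /qform trmx_mul !mulmxA. Qed.

Lemma qformZ {n} (k : R) (A : 'M[R]_n) x : qform (k *: A) x = k * qform A x.
Proof. by rewrite /qform -scalemxAr -scalemxAl mxE. Qed.

Lemma qformD {n} (A B : 'M[R]_n) x : qform (A + B) x = qform A x + qform B x.
Proof. by rewrite /qform mulmxDr mulmxDl mxE. Qed.

Lemma qformN {n} (A : 'M[R]_n) x : qform (- A) x = - qform A x.
Proof. by rewrite /qform mulmxN mulNmx mxE. Qed.

Lemma qform1 {n} (x : 'cV[R]_n) : qform 1%:M x = \sum_i x i 0 ^+ 2.
Proof. by rewrite /qform mulmx1 mxE; apply: eq_bigr => i _; rewrite mxE expr2. Qed.

Lemma qformTT {n m} (M : 'M[R]_(m, n)) x : qform (M^T *m M) x = \sum_i (M *m x) i 0 ^+ 2.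
Proof. by rewrite -[M^T *m M]mulmx1 -mulmxA mulmx1 -[M^T]mulmx1 qform_conj qform1. Qed.

Lemma qformTT_ge0 {n m} (M : 'M[R]_(m, n)) x : 0 <= qform (M^T *m M) x.
Proof. by rewrite qformTT; apply: sumr_ge0 => i _; exact: sqr_ge0. Qed.

Lemma unit_neq0 {n} (M : 'M[R]_n) (x : 'cV[R]_n) : M \in unitmx -> x != 0 -> M *m x != 0.
Proof.
move=> hM hx; apply/negP => /eqP h; move/negP: hx; apply.
by rewrite -(mulKmx hM x) h mulmx0.
Qed.

Lemma pd_unit {n} (A : 'M[R]_n) : pdmx A -> A \in unitmx.
Proof.
move=> [hs hq]; rewrite unitmxE unitfE; apply/negP => /det0P [v hv hvA].
have hx : v^T != 0 by apply: contra hv => /eqP h; rewrite -[v]trmxK h trmx0.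
have := hq _ hx; rewrite /qform trmxK hvA mul0mx mxE ltxx //.
Qed.

Lemma pd_conj {n} (A M : 'M[R]_n) : pdmx A -> M \in unitmx -> pdmx (M^T *m A *m M).
Proof.
move=> [hs hq] hM; split.
  by rewrite /symmx_real !trmx_mul trmxK hs mulmxA.
by move=> x hx; rewrite qform_conj; apply: hq; apply: unit_neq0.
Qed.

Lemma psd_conj {n m} (A : 'M[R]_n) (M : 'M[R]_(n, m)) : psdmx A -> psdmx (M^T *m A *m M).
Proof.
move=> [hs hq]; split.
  by rewrite /symmx_real !trmx_mul trmxK hs mulmxA.
by move=> x; rewrite qform_conj.
Qed.

Lemma diag_conj {n} (A L : 'M[R]_n) i : (L^T *m A *m L) i i = qform A (col i L).
Proof.
rewrite colE -qform_conj /qform trmx_delta -rowE -colE.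
by rewrite !mxE.
Qed.

Lemma trace_psd {n} (A Z : 'M[R]_n) : psdmx A -> psdmx Z -> 0 <= \tr (A *m Z).
Proof.
move=> hA /chol [L [_ ->]].
rewrite mulmxA mxtrace_mulC mulmxA /mxtrace.
apply: sumr_ge0 => i _; rewrite diag_conj; exact: hA.2.
Qed.



Lemma psdD {n} (A B : 'M[R]_n) : psdmx A -> psdmx B -> psdmx (A + B).
Proof.
move=> [ha qa] [hb qb]; split; first by rewrite /symmx_real linearD /= ha hb.
by move=> x; rewrite qformD addr_ge0.
Qed.

Lemma psdZ {n} (k : R) (A : 'M[R]_n) : 0 <= k -> psdmx A -> psdmx (k *: A).
Proof.
move=> hk [ha qa]; split; first by rewrite /symmx_real linearZ /= ha.
by move=> x; rewrite qformZ mulr_ge0.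
Qed.

Lemma psd1 n : psdmx (1%:M : 'M[R]_n).
Proof.
split; first by rewrite /symmx_real tr_scalar_mx.
by move=> x; rewrite qform1; apply: sumr_ge0 => i _; exact: sqr_ge0.
Qed.

Lemma qform_lin {n} (N : 'M[R]_n) x y t : N^T = N ->
  qform N (x + t *: y) = qform N x + 2 * t * (y^T *m N *m x) 0 0 + t ^+ 2 * qform N y.
Proof.
move=> hN; have ht : (x + t *: y)^T = x^T + t *: y^T by rewrite linearD linearZ.
have e : x^T *m N *m y = y^T *m N *m x.
  rewrite [LHS]mx11_scalar [RHS]mx11_scalar; congr (_%:M).
  by rewrite -tr11E !trmx_mul trmxK hN mulmxA.
rewrite /qform ht !mulmxDl !mulmxDr.
rewrite -!scalemxAl -!scalemxAr e.
set a := x^T *m N *m x; set b := y^T *m N *m x; set c := y^T *m N *m y.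
rewrite !mxE; ring.
Qed.

Lemma qform_zero {n} (N : 'M[R]_n) x : psdmx N -> qform N x = 0 -> N *m x = 0.
Proof.
move=> [hs hq] h0.
set y := N *m x.
have hb : (y^T *m N *m x) 0 0 = \sum_i y i 0 ^+ 2.
  by rewrite -mulmxA -/y mxE; apply: eq_bigr => i _; rewrite mxE expr2.
have hb0 : 0 <= \sum_i y i 0 ^+ 2 by apply: sumr_ge0 => i _; exact: sqr_ge0.
have : 0 <= - 2 * \sum_i y i 0 ^+ 2.
  apply: (@L0 _ (qform N y)) => s /andP [s0 s1].
  have := hq (x + (- s) *: y); rewrite qform_lin // h0 hb.
  have -> : 0 + 2 * - s * \sum_i y i 0 ^+ 2 + (- s) ^+ 2 * qform N y
     = s * (- 2 * \sum_i y i 0 ^+ 2 + s * qform N y) by ring.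
  by rewrite pmulr_rge0.
move=> hle.
have hsum : \sum_i y i 0 ^+ 2 = 0 by lra.
apply/matrixP => i j; rewrite (ord1 j) [RHS]mxE.
have := psumr_eq0P (fun k _ => sqr_ge0 (y k 0)) hsum (i:=i) isT.
by move/eqP; rewrite sqrf_eq0 => /eqP.
Qed.

Lemma psd_orth {n} (N P : 'M[R]_n) : psdmx N -> psdmx P -> \tr (N *m P) = 0 -> N *m P = 0.
Proof.
move=> hN /chol [L [_ ->]] htr.
have hcol : forall i, qform N (col i L) = 0.
  move: htr; rewrite mulmxA mxtrace_mulC mulmxA /mxtrace => hs i.
  have hs' : \sum_k qform N (col k L) = 0.
    by rewrite -[RHS]hs; apply: eq_bigr => k _; rewrite diag_conj.
  exact: (psumr_eq0P (fun k _ => hN.2 (col k L)) hs' (i:=i) isT).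
have hNL : N *m L = 0.
  apply/matrixP => a i.
  have -> : (N *m L) a i = (N *m col i L) a 0.
    by rewrite colE mulmxA -colE [RHS]mxE.
  by rewrite (@qform_zero _ N _ hN (hcol i)) !mxE.
by rewrite mulmxA hNL mul0mx.
Qed.

Definition fro {n} (A H : 'M[R]_n) := \sum_i \sum_j A i j * H i j.

Lemma frob2_lin {n} (A H : 'M[R]_n) t :
  frob2 (A + t *: H) = frob2 A + 2 * t * fro A H + t ^+ 2 * frob2 H.
Proof.
rewrite /frob2 /fro.
transitivity (\sum_i \sum_j (A i j ^+ 2 + (2 * t) * (A i j * H i j) + t ^+ 2 * H i j ^+ 2)).
  by apply: eq_bigr => i _; apply: eq_bigr => j _; rewrite !mxE; ring.
under eq_bigr => i _ do rewrite !big_split /= -!mulr_sumr.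
by rewrite !big_split /= -!mulr_sumr.
Qed.

Lemma fro_tr {n} (A H : 'M[R]_n) : H^T = H -> fro A H = \tr (A *m H).
Proof.
move=> hH; rewrite /fro /mxtrace; apply: eq_bigr => i _; rewrite [RHS]mxE.
apply: eq_bigr => j _; congr (_ * _); by rewrite -{1}hH mxE.
Qed.

Lemma proj_props {n} (X P : 'M[R]_n) : symmx_real X -> is_proj_psd X P ->
  psdmx (P - X) /\ \tr ((P - X) *m P) = 0.
Proof.
move=> hX [hP hmin].
set A := X - P.
have hN : P - X = - A by rewrite /A opprB.
have hi : forall H, psdmx H -> 0 <= \tr ((P - X) *m H).
  move=> H hH.
  have : 0 <= - 2 * fro A H.
    apply: (@L0 _ (frob2 H)) => s /andP [s0 s1].
    have := hmin (P + s *: H) (psdD _ _ hP (psdZ _ _ (ltW s0) hH)).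
    have -> : X - (P + s *: H) = A + (- s) *: H by rewrite opprD addrA scaleNr.
    rewrite frob2_lin.
    have -> : frob2 A + 2 * - s * fro A H + (- s) ^+ 2 * frob2 H
      = frob2 A + s * (- 2 * fro A H + s * frob2 H) by ring.
    by rewrite lerDl pmulr_rge0.
  rewrite fro_tr ?hH.1 // hN mulNmx raddfN => h; lra.
split.
  split; first by rewrite /symmx_real linearB /= hX hP.1.
  move=> x.
  have hH : psdmx (x *m x^T).
    by have := @psd_conj 1 n 1%:M x^T (psd1 1); rewrite trmxK mulmx1.
  have := hi _ hH.
  by rewrite mulmxA mxtrace_mulC trace_mx11 mulmxA.
apply/eqP; rewrite eq_le hi // andbT.
have : 0 <= 2 * fro A P.
  apply: (@L0 _ (frob2 P)) => s /andP [s0 s1].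
  have h1s : 0 <= 1 - s by lra.
  have := hmin ((1 - s) *: P) (psdZ _ _ h1s hP).
  have -> : X - (1 - s) *: P = A + s *: P by rewrite /A scalerBl scale1r opprD opprK addrA.
  rewrite frob2_lin.
  have -> : frob2 A + 2 * s * fro A P + s ^+ 2 * frob2 P
    = frob2 A + s * (2 * fro A P + s * frob2 P) by ring.
  by rewrite lerDl pmulr_rge0.
rewrite fro_tr ?hP.1 // hN mulNmx raddfN => h; lra.
Qed.



Lemma pd_psd {n} (A : 'M[R]_n) : pdmx A -> psdmx A.
Proof.
move=> [hs hq]; split => // x.
have [->|hx] := eqVneq x 0; first by rewrite /qform mulmx0 mxE.
exact: ltW (hq x hx).
Qed.

Lemma ln_prod_le (n : nat) (F : 'I_n -> R) : (forall i, 0 < F i) ->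
  0 < \prod_i F i /\ ln (\prod_i F i) <= \sum_i (F i - 1).
Proof.
move=> hF.
apply: (big_rec2 (fun a b => 0 < a /\ ln a <= b)).
  by rewrite ln1.
move=> i y1 y2 _ [hy1 hy2]; split; first by rewrite mulr_gt0.
rewrite lnM ?posrE //.
have := @le_ln1Dx R (F i - 1); rewrite [1 + _]addrC subrK.
have : -1 < F i - 1 by have := hF i; lra.
move=> h1 /(_ h1); lra.
Qed.

Lemma logdet_le {n} (S : 'M[R]_n) : pdmx S -> 0 < \det S /\ ln (\det S) <= \tr S - n%:R.
Proof.
move=> hS.
have hu := pd_unit _ hS.
have [L [hLt hL]] := chol _ _ (pd_psd _ hS).
have hdet : \det S = \prod_i (L i i ^+ 2).
  by rewrite hL det_mulmx det_tr det_trig // -expr2 prodrXl.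
have hne : \prod_i L i i != 0.
  by move: hu; rewrite unitmxE unitfE hdet prodrXl expf_eq0 /= => /negP /negP.
have hpos : forall i, 0 < L i i ^+ 2.
  move=> i; rewrite lt0r sqr_ge0 andbT sqrf_eq0.
  apply/negP => /eqP h; move/negP: hne; apply.
  by rewrite (bigD1 i) //= h mul0r.
have [h1 h2] := ln_prod_le _ _ hpos.
rewrite hdet; split => //.
apply: (le_trans h2).
have htr : \sum_i L i i ^+ 2 <= \tr S.
  rewrite hL /mxtrace; apply: ler_sum => i _; rewrite mxE.
  rewrite (bigD1 i) //= mxE -expr2 lerDl.
  by apply: sumr_ge0 => j _; rewrite mxE -expr2 sqr_ge0.
rewrite sumrB sumr_const card_ord; lra.
Qed.



Lemma inv_eq {n} (M Q : 'M[R]_n) : M \in unitmx -> M *m Q = 1%:M -> invmx M = Q.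
Proof.
move=> hM hQ.
by rewrite -[invmx M]mulmx1 -hQ mulmxA mulVmx // mul1mx.
Qed.

Lemma logdet_concave {n} (A M : 'M[R]_n) : pdmx A -> pdmx M ->
  ln (\det A) <= ln (\det M) + \tr (invmx M *m A) - n%:R.
Proof.
move=> hA hM.
have huM := pd_unit _ hM.
have [L [_ hL]] := chol _ _ (pd_psd _ hM).
have huL : L \in unitmx.
  move: huM; rewrite hL !unitmxE det_mulmx det_tr !unitfE mulf_eq0 negb_or.
  by case/andP.
set Li := invmx L.
set S := Li *m A *m Li^T.
have hS : pdmx S.
  have := pd_conj _ Li^T hA; rewrite trmxK; apply.
  by rewrite unitmx_tr unitmx_inv.
have hAS : A = L *m S *m L^T.
  rewrite /S /Li trmx_inv !mulmxA mulmxV // mul1mx -mulmxA mulVmx ?unitmx_tr //.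
  by rewrite mulmx1.
have hdet : \det A = \det M * \det S.
  by rewrite {1}hAS hL !det_mulmx det_tr; ring.
have hinv : invmx M = Li^T *m Li.
  apply: inv_eq => //.
  rewrite hL /Li trmx_inv mulmxA -(mulmxA L) mulmxV ?unitmx_tr // mulmx1 mulmxV //.
have htr : \tr (invmx M *m A) = \tr S.
  by rewrite hinv -mulmxA mxtrace_mulC /S.
have [hSpos hSle] := logdet_le _ hS.
have [hMpos _] := logdet_le _ hM.
rewrite hdet lnM ?posrE // htr; lra.
Qed.

Lemma pdZ {n} (k : R) (A : 'M[R]_n) : 0 < k -> pdmx A -> pdmx (k *: A).
Proof.
move=> hk [ha qa]; split; first by rewrite /symmx_real linearZ /= ha.
by move=> x hx; rewrite qformZ mulr_gt0 // qa.
Qed.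

Lemma pd1N {n} (N : 'M[R]_n) : psdmx N -> pdmx (1%:M + N).
Proof.
move=> [hs hq]; split; first by rewrite /symmx_real linearD /= hs tr_scalar_mx.
move=> x hx; rewrite qformD qform1.
suff : 0 < \sum_i x i 0 ^+ 2 by have := hq x; lra.
rewrite lt0r sumr_ge0 ?andbT; last by move=> i _; exact: sqr_ge0.
apply/negP => /eqP h; move/negP: hx; apply; apply/eqP.
apply/matrixP => i j; rewrite (ord1 j) [RHS]mxE.
have := psumr_eq0P (fun k _ => sqr_ge0 (x k 0)) h (i:=i) isT.
by move/eqP; rewrite sqrf_eq0 => /eqP.
Qed.

Lemma core_ineq {n} (C P N Z : 'M[R]_n) : psdmx N -> psdmx P -> psdmx Z ->
  N *m P = 0 -> C + P = 1%:M + N -> pdmx (C + Z) ->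
  - \tr Z + ln (\det (C + Z)) <= - \tr P + ln (\det (C + P)).
Proof.
move=> hN hP hZ hNP hCP hCZ.
set M := C + P.
have hM : pdmx M by rewrite /M hCP; exact: pd1N.
have hMu := pd_unit _ hM.
set W := invmx M.
have hWs : W^T = W by rewrite /W trmx_inv hM.1.
have hWM : W *m M = 1%:M by rewrite mulVmx.
have hMW : M *m W = 1%:M by rewrite mulmxV.
have hIW : 1%:M - W = N *m W.
  by rewrite -hMW /M hCP mulmxDl mul1mx addrAC subrr add0r.
have hPN : P *m N = 0.
  by rewrite -[P]hP.1 -[N]hN.1 -trmx_mul hNP trmx0.
have htrWP : \tr ((1%:M - W) *m P) = 0.
  by rewrite hIW -mulmxA mxtrace_mulC -mulmxA hPN mulmx0 mxtrace0.
have hpsdIW : psdmx (1%:M - W).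
  have -> : 1%:M - W = W^T *m N *m W + (N *m W)^T *m (N *m W).
    have hWNW : W + N *m W = 1%:M by rewrite addrC -hIW subrK.
    have hWN : W *m N = N *m W.
      apply: (@addrI _ W); rewrite hWNW -{1}[W]mulmx1 -mulmxDr -hCP.
      exact: hWM.
    by rewrite hIW trmx_mul hN.1 hWs -mulmxDr hWNW mulmx1 hWN.
  apply: psdD; first exact: psd_conj.
  split; first by rewrite /symmx_real trmx_mul trmxK.
  by move=> x; exact: qformTT_ge0.
have htrZ := trace_psd _ _ hpsdIW hZ.
have hconc := logdet_concave _ _ hCZ hM.
have hCZe : C + Z = M - P + Z by rewrite /M addrK.
have htrW : \tr (W *m (C + Z)) = n%:R - \tr (W *m P) + \tr (W *m Z).
  by rewrite hCZe mulmxDr mulmxBr hWM mxtraceD raddfB /= mxtrace1.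
move: htrZ htrWP; rewrite !mulmxBl !mul1mx !mxtraceD !raddfN => h1 h2.
lra.
Qed.

Lemma main_core {p} (kj : R) (hk : 0 < kj) (Gamma B : 'M[R]_p) (hG : pdmx Gamma)
    (hB : symmx_real B) (G12 P : 'M[R]_p) (hG12 : is_sqrtmx Gamma G12)
    (hP : is_proj_psd (1%:M - invmx G12 *m B *m invmx G12) P) :
  is_optimal kj Gamma B (kj *: (G12 *m P *m G12)).
Proof.
case: hG12 => hGpd hGG.
set G := G12 in hGpd hGG hP *.
have hGs : G^T = G := hGpd.1.
have hGu := pd_unit _ hGpd.
set Gi := invmx G in hP *.
have hGis : Gi^T = Gi by rewrite /Gi trmx_inv hGs.
have hGiu : Gi \in unitmx by rewrite unitmx_inv.
have hGGi : G *m Gi = 1%:M by rewrite mulmxV.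
have hGiG : Gi *m G = 1%:M by rewrite mulVmx.
have hinvG : invmx Gamma = Gi *m Gi.
  apply: inv_eq; first exact: pd_unit.
  by rewrite -hGG -mulmxA [G *m (Gi *m Gi)]mulmxA hGGi mul1mx hGGi.
set C := Gi *m B *m Gi in hP *.
have hCs : C^T = C by rewrite /C !trmx_mul hGis hB mulmxA.
have hXs : symmx_real (1%:M - C) by rewrite /symmx_real linearB /= hCs tr_scalar_mx.
have [hNpsd htr] := proj_props _ _ hXs hP.
set N := P - (1%:M - C) in hNpsd htr.
have hNP : N *m P = 0 := psd_orth _ _ hNpsd hP.1 htr.
have hCP : C + P = 1%:M + N.
  by rewrite /N opprB addrCA [1%:M + _]addrC subrK addrC.
have hdG : 0 < \det G ^+ 2.
  rewrite lt0r sqr_ge0 andbT sqrf_eq0.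
  by move: hGu; rewrite unitmxE unitfE.
pose ZY (Y : 'M[R]_p) := Gi *m (kj^-1 *: Y) *m Gi.
have hk0 : kj != 0 by rewrite gt_eqF.
have hobj : forall Y, objective kj Gamma B Y = kj * (- \tr (ZY Y) + ln (\det G ^+ 2 * \det (C + ZY Y))).
  move=> Y; rewrite /objective /ZY hinvG.
  have -> : \tr (Y *m (Gi *m Gi)) = kj * \tr (Gi *m (kj^-1 *: Y) *m Gi).
    rewrite -scalemxAr -scalemxAl mxtraceZ mulrA mulfV // mul1r.
    by rewrite [in LHS]mulmxA [LHS]mxtrace_mulC mulmxA.
  have -> : B + kj^-1 *: Y = G *m (C + Gi *m (kj^-1 *: Y) *m Gi) *m G.
    rewrite /C mulmxDr mulmxDl !mulmxA hGGi !mul1mx -!mulmxA hGiG !mulmx1.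
    done.
  rewrite !det_mulmx; set d := \det (C + _).
  have -> : \det G * d * \det G = \det G ^+ 2 * d by ring.
  ring.
have hZstar : ZY (kj *: (G *m P *m G)) = P.
  rewrite /ZY scalerA mulVf // scale1r !mulmxA hGiG mul1mx -mulmxA hGGi mulmx1.
  done.
have hfeas : forall Y, feasible kj B Y -> psdmx (ZY Y) /\ pdmx (C + ZY Y).
  move=> Y [hY hlt]; split.
    rewrite /ZY -{1}hGis; apply: psd_conj; apply: psdZ => //.
    by rewrite invr_ge0 ltW.
  have -> : C + ZY Y = kj^-1 *: (Gi^T *m (Y - - (kj *: B)) *m Gi).
    rewrite hGis opprK /ZY /C mulmxDr mulmxDl scalerDr addrC; congr (_ + _).
      by rewrite -scalemxAr -scalemxAl.
    by rewrite -scalemxAr -scalemxAl scalerA mulVf // scale1r.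
  apply: pdZ; first by rewrite invr_gt0.
  exact: pd_conj.
split.
  split.
    rewrite -{1}hGs; apply: psdZ; first exact: ltW.
    exact: psd_conj hP.1.
  rewrite /lt_loewner opprK.
  have -> : kj *: (G *m P *m G) + kj *: B = kj *: (G^T *m (1%:M + N) *m G).
    rewrite -scalerDr hGs -hCP /C mulmxDr mulmxDl !mulmxA hGGi mul1mx.
    by rewrite -[B *m Gi *m G]mulmxA hGiG mulmx1 addrC.
  apply: pdZ => //; apply: pd_conj => //; exact: pd1N.
move=> Y hY.
have [hZ hCZ] := hfeas Y hY.
rewrite !hobj hZstar ler_pM2l //.
have hCZpos := (logdet_le _ hCZ).1.
have hCPpos : 0 < \det (C + P) by rewrite hCP; exact: (logdet_le _ (pd1N _ hNpsd)).1.
have hGpos := (logdet_le _ hGpd).1.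
rewrite !lnM ?posrE //.
have := core_ineq _ _ _ _ hNpsd hP.1 hZ hNP hCP hCZ.
lra.
Qed.

End Main.

Theorem mainTheorem2 (R : realType) (p : nat) (hp : (1 <= p)%N) (kj : R)
    (hk : 0 < kj) (Gamma B : 'M[R]_p) (hG : pdmx Gamma) (hB : symmx_real B)
    (G12 P : 'M[R]_p) (hG12 : is_sqrtmx Gamma G12)
    (hP : is_proj_psd (1%:M - invmx G12 *m B *m invmx G12) P) :
  is_optimal kj Gamma B (kj *: (G12 *m P *m G12)).
Proof. exact: main_core. Qed.
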